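(* A point $(s,p)\in\mathbb{C}^2$ belongs to $\mathbb{G}=\{(z_1+z_2,z_1z_2):z_1,z_2\in\mathbb{D}\}$ if and only if both $1>|p|^2+\mathrm{Im}(\overline{s}p+\overline{s})$ and $2+2|p|^2>|s|^2+|s^2-4p|$.
   Context: $\mathbb{D}$ is the open unit disc in $\mathbb{C}$. *)

(* Defs.v *)
From HB Require Import structures.
From mathcomp Require Import all_boot all_order all_algebra.
From mathcomp Require Import complex.
From mathcomp Require Import reals.
Set Implicit Arguments. Unset Strict Implicit. Unset Printing Implicit Defensive.
Import Order.TTheory GRing.Theory Num.Theory.
Local Open Scope ring_scope.

Definition in_disc (R : realType) (z : R[i]) : Prop := Normc.normc z < 1.

Definition in_symm_bidisc (R : realType) (s p : R[i]) : Prop :=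
  exists z1 z2 : R[i], in_disc z1 /\ in_disc z2 /\ s = z1 + z2 /\ p = z1 * z2.

(* Main.v *)
Require Import Defs.
From HB Require Import structures.
From mathcomp Require Import all_boot all_order all_algebra.
From mathcomp Require Import complex.
From mathcomp Require Import reals.
From mathcomp Require Import ring lra.
Import Order.TTheory GRing.Theory Num.Theory.
Local Open Scope ring_scope.

Section K.
Variable R : realType.
Lemma nc2 (z : R[i]) : Normc.normc z ^+ 2 = complex.Re z ^+ 2 + complex.Im z ^+ 2.
Proof. case: z => a b /=. by rewrite sqr_sqrtr // addr_ge0 // sqr_ge0. Qed.
Lemma nclt1 (z : R[i]) : (Normc.normc z < 1) <-> (complex.Re z ^+ 2 + complex.Im z ^+ 2 < 1).
Proof.
rewrite -nc2. have h : 0 <= Normc.normc z by case: z => a b /=; exact: sqrtr_ge0.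
split => H. by rewrite expr2; nra. nra.
Qed.
Lemma ncsq (z : R[i]) : Normc.normc (z ^+ 2) = complex.Re z ^+ 2 + complex.Im z ^+ 2.
Proof. by rewrite expr2 Normc.normcM -expr2 nc2. Qed.
Lemma key (z1 z2 : R[i]) :
  (Normc.normc z1 < 1 /\ Normc.normc z2 < 1) <->
  (Normc.normc (z1*z2) ^+ 2 + complex.Im (conjc (z1+z2) * (z1*z2) + conjc (z1+z2)) < 1 /\
   Normc.normc (z1+z2) ^+ 2 + Normc.normc ((z1+z2) ^+ 2 - 4%:R * (z1*z2)) < 2%:R + 2%:R * Normc.normc (z1*z2) ^+ 2).
Proof.
have -> : (z1+z2) ^+ 2 - 4%:R * (z1*z2) = (z1 - z2)^+2 by ring.
rewrite ncsq !nc2 !nclt1.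
case: z1 => a b; case: z2 => c d /=.
set A := a ^+ 2 + b ^+ 2; set B := c ^+ 2 + d ^+ 2.
have e1 : (a * c - b * d) ^+ 2 + (a * d + b * c) ^+ 2 = A * B by rewrite /A /B; ring.
have e2 : (a + c) ^+ 2 + (b + d) ^+ 2 + ((a - c) ^+ 2 + (b - d) ^+ 2) = 2 * A + 2 * B by rewrite /A /B; ring.
have e3 : (a + c) * (a * d + b * c) + - (b + d) * (a * c - b * d) - (b + d) = - (1 - B) * b - (1 - A) * d by rewrite /A /B; ring.
have hb : b ^+ 2 <= A by rewrite /A; have := sqr_ge0 a; lra.
have hd : d ^+ 2 <= B by rewrite /B; have := sqr_ge0 c; lra.
have A0 : 0 <= A by rewrite /A addr_ge0 // sqr_ge0.
have B0 : 0 <= B by rewrite /B addr_ge0 // sqr_ge0.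
have q1 : (1 + b) ^+ 2 <= 1 + A + 2 * b by rewrite expr2; nra.
have q2 : (1 + d) ^+ 2 <= 1 + B + 2 * d by rewrite expr2; nra.
have id : 1 - A * B + (1 - B) * b + (1 - A) * d = (1 - A) * ((1 + B) / 2 + d) + (1 - B) * ((1 + A) / 2 + b) by field.
rewrite e1 e2 e3.
have s1 : 0 <= (1 + b) ^+ 2 by apply: sqr_ge0.
have s2 : 0 <= (1 + d) ^+ 2 by apply: sqr_ge0.
split.
- case => hA hB.
  have b1 : 0 < 1 + b by rewrite expr2 in hb; nra.
  have d1 : 0 < 1 + d by rewrite expr2 in hd; nra.
  have t1 : 0 < (1 + A) / 2 + b by rewrite expr2 in q1; nra.
  have t2 : 0 < (1 + B) / 2 + d by rewrite expr2 in q2; nra.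
  split; nra.
- case => h1 h2.
  have t1 : 0 <= (1 + A) / 2 + b by nra.
  have t2 : 0 <= (1 + B) / 2 + d by nra.
  have hp : 0 < (1 - A) * (1 - B) by nra.
  have hpos : 0 < 1 - A * B + (1 - B) * b + (1 - A) * d by lra.
  rewrite id in hpos.
  case: (ltrP A 1) => hA; case: (ltrP B 1) => hB; try (split; done); nra.
Qed.
End K.


Theorem corollary3p4 (R : realType) (s p : R[i]) :
  in_symm_bidisc s p <->
  (Normc.normc p ^+ 2 + complex.Im (conjc s * p + conjc s) < 1 /\
   Normc.normc s ^+ 2 + Normc.normc (s ^+ 2 - 4%:R * p) < 2%:R + 2%:R * Normc.normc p ^+ 2).
Proof.
split.
- case=> z1 [z2 [h1 [h2 [-> ->]]]]. by apply/key.
- move=> H.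
  set w := sqrtc (s ^+ 2 - 4%:R * p).
  have hw : w ^+ 2 = s ^+ 2 - 4%:R * p by rewrite sqr_sqrtc.
  have es : s = (s + w) / 2%:R + (s - w) / 2%:R.
    have h2 : (2%:R : R[i]) != 0 by rewrite pnatr_eq0.
    by field.
  have ep : p = ((s + w) / 2%:R) * ((s - w) / 2%:R).
    have h2 : (2%:R : R[i]) != 0 by rewrite pnatr_eq0.
    have -> : (s + w) / 2%:R * ((s - w) / 2%:R) = (s ^+ 2 - w ^+ 2) / 4%:R by field.
    rewrite hw.
    have h4 : (4%:R : R[i]) != 0 by rewrite pnatr_eq0.
    by field.
  have := @key R ((s + w) / 2%:R) ((s - w) / 2%:R).
  rewrite -es -ep => -[_ /(_ H) [k1 k2]].
  exists ((s + w) / 2%:R), ((s - w) / 2%:R).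
  split; first exact: k1.
  split; first exact: k2.
  by split.
Qed.
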